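(* Let $d\ge2$, $(S,\mathfrak n,\mathbf k)$ a complete regular local ring with $\mathbf k$ algebraically closed of characteristic not dividing $d$, $0\ne f\in\mathfrak n^2$, and $R^\sharp=S[[z]]/(f+z^d)$; assume $f+z^d$ is irreducible. Let $N$ be a maximal Cohen-Macaulay $R^\sharp$-module and $X\in\mathrm{MF}_S^d(f)$. Then $\mu_{R^\sharp}(N)=\operatorname{rank}_S(N)$ if and only if $N^\flat$ is reduced, and $\mu_{R^\sharp}(X^\sharp)=\operatorname{rank}_S(X^\sharp)$ if and only if $X$ is reduced.
   Context: $\mathrm{MF}_S^d(f)$ is the category of matrix factorizations of $f$ with $d$ factors: $X=(\phi_1:F_2\to F_1,\dots,\phi_d:F_1\to F_d)$ with $F_i$ finitely generated free $S$-modules of equal rank and $\phi_1\cdots\phi_d=f\cdot1_{F_1}$. $X$ is reduced if $\mathrm{Im}\,\phi_k\subseteq\mathfrak nF_k$ for all $k$. A maximal Cohen-Macaulay $R^\sharp$-module is a finitely generated $R^\sharp$-module free over $S$; $\mu_{R^\sharp}$ denotes minimal number of generators. Fix $\mu\in S$ with $\mu^d=-1$. For such $N$ with $\phi:N\to N$ multiplication by $z$, $N^\flat=(\mu\phi,\dots,\mu\phi)$. For $X=(\phi_1,\dots,\phi_d)$, $X^\sharp$ is the $S$-module $F_d\oplus\cdots\oplus F_1$ with $z\cdot(x_d,x_{d-1},\dots,x_1)=(\mu^{-1}\phi_d(x_1),\mu^{-1}\phi_{d-1}(x_d),\dots,\mu^{-1}\phi_1(x_2))$. *)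

(* Defs.v *)
From HB Require Import structures.
From mathcomp Require Import all_boot all_order all_algebra.
Set Implicit Arguments. Unset Strict Implicit. Unset Printing Implicit Defensive.
Import Order.TTheory GRing.Theory Num.Theory.
Local Open Scope ring_scope.

Section CommAlg.
Variable S : comUnitRingType.

Definition is_ideal (I : S -> Prop) : Prop :=
  [/\ I 0, (forall x y, I x -> I y -> I (x + y)) & (forall a x, I x -> I (a * x))].

Definition is_prime (P : S -> Prop) : Prop :=
  [/\ is_ideal P, ~ P 1 & forall a b, P (a * b) -> P a \/ P b].

Definition ideal_generated_by (I : S -> Prop) (m : nat) (g : 'I_m -> S) : Prop :=
  forall x, I x <-> exists c : 'I_m -> S, x = \sum_(i < m) c i * g i.

Definition noetherian : Prop :=
  forall I, is_ideal I -> exists m (g : 'I_m -> S), ideal_generated_by I g.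

(** the set of non-units; S is local iff it is an ideal (the maximal ideal n) *)
Definition nn (x : S) : Prop := x \notin GRing.unit.

Definition local_ring : Prop := forall x y, nn x -> nn y -> nn (x + y).

Fixpoint mpow (k : nat) (x : S) : Prop :=
  match k with
  | 0 => True
  | k'.+1 => exists m (a b : 'I_m -> S),
      (forall i, nn (a i) /\ mpow k' (b i)) /\ x = \sum_(i < m) a i * b i
  end.

Definition prime_chain (k : nat) (P : 'I_k.+1 -> S -> Prop) : Prop :=
  (forall i, is_prime (P i)) /\
  forall (i : 'I_k.+1) (j : 'I_k.+1), j = i.+1 :> nat ->
     (forall x, P i x -> P j x) /\ exists x, P j x /\ ~ P i x.

Definition krull_dim (k : nat) : Prop :=
  (exists P : 'I_k.+1 -> S -> Prop, prime_chain P) /\ forall P : 'I_k.+2 -> S -> Prop, ~ prime_chain P.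

Definition edim (e : nat) : Prop :=
  (exists g : 'I_e -> S, ideal_generated_by nn g) /\
  forall e' (g : 'I_e' -> S), ideal_generated_by nn g -> (e <= e')%N.

Definition regular_local : Prop :=
  [/\ noetherian, local_ring & exists e, krull_dim e /\ edim e].

Definition complete : Prop :=
  (forall x : nat -> S, (forall j, mpow j (x j.+1 - x j)) ->
      exists y, forall j, mpow j (y - x j)) /\
  (forall y, (forall j, mpow j y) -> y = 0).

(** residue field k = S/n algebraically closed: every monic nonconstant
    polynomial has a root modulo n *)
Definition residue_alg_closed : Prop :=
  forall p : {poly S}, p \is monic -> (1 < size p)%N -> exists a, nn p.[a].

(** formal power series S[[z]] as coefficient sequences *)
Definition ps_mul (g h : nat -> S) : nat -> S :=
  fun k => \sum_(i < k.+1) g i * h (k - i)%N.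

Definition ps_one : nat -> S := fun k => if k == 0%N then 1 else 0.

Definition ps_unit (g : nat -> S) : Prop :=
  exists h, forall k, ps_mul g h k = ps_one k.

Definition ps_irreducible (F : nat -> S) : Prop :=
  [/\ exists k, F k != 0, ~ ps_unit F &
      forall g h, (forall k, ps_mul g h k = F k) -> ps_unit g \/ ps_unit h].

Definition f_plus_zd (f : S) (d : nat) : nat -> S :=
  fun k => (if k == 0%N then f else 0) + (if k == d then 1 else 0).

(** minimal number of generators of an S-module V with an S-linear
    endomorphism z (the R^#-module structure, z acting as z); the
    R^#-submodule generated by v_0..v_{m-1} is spanned over S by the
    z^k v_i (R^# = S[z]/(f+z^d) by Weierstrass preparation). *)
Definition generates (V : lmodType S) (z : V -> V) (m : nat) (v : 'I_m -> V) :=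
  forall y : V, exists K (c : 'I_m -> 'I_K -> S),
    y = \sum_(i < m) \sum_(k < K) c i k *: iter k z (v i).

Definition mu_is (V : lmodType S) (z : V -> V) (m : nat) : Prop :=
  (exists v : 'I_m -> V, generates z v) /\
  forall m' (v : 'I_m' -> V), generates z v -> (m <= m')%N.

(** matrix factorizations with d factors, all F_i = S^n (column vectors);
    X k represents phi_(k+1) : F_(k+2) -> F_(k+1) (indices mod d) *)
Definition is_MF (d : nat) (f : S) (n : nat) (X : 'I_d -> 'M[S]_n) : Prop :=
  \prod_(k < d) X k = f%:M.

Definition reduced (d n : nat) (X : 'I_d -> 'M[S]_n) : Prop :=
  forall (k : 'I_d) (x : 'cV[S]_n) (i : 'I_n), nn ((X k *m x) i 0).

Definition flat (d n : nat) (mu : S) (phi : 'M[S]_n) : 'I_d -> 'M[S]_n :=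
  fun _ => mu *: phi.

(** action of z on X^sharp = F_d + ... + F_1, an element being x with
    x k in F_(k+1): z x has F_(k+1)-component mu^-1 phi_(k+1)(x_(k+2)) *)
Definition sharp_z (d n : nat) (mu : S) (X : 'I_d -> 'M[S]_n)
  (x : {ffun 'I_d -> 'cV[S]_n}) : {ffun 'I_d -> 'cV[S]_n} :=
  [ffun k => mu^-1 *: (X k *m x (ordS k))].

End CommAlg.

(* Main.v *)
Require Import Defs.
From HB Require Import structures.
From mathcomp Require Import all_boot all_order all_algebra.
From mathcomp Require Import zify ring.
Import Order.TTheory GRing.Theory Num.Theory.
Local Open Scope ring_scope.


Lemma nn0 {S : comUnitRingType} : nn (0 : S).
Proof. by rewrite /nn unitr0. Qed.

Lemma nnM {S : comUnitRingType} {a x : S} : nn x -> nn (a * x).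
Proof. by rewrite /nn unitrM => /negbTE ->; rewrite andbF. Qed.

Lemma nnMr {S : comUnitRingType} {a x : S} : nn x -> nn (x * a).
Proof. by rewrite mulrC; apply: nnM. Qed.

Lemma nnN {S : comUnitRingType} {x : S} : nn x -> nn (- x).
Proof. by rewrite /nn unitrN. Qed.

Lemma nnB {S : comUnitRingType} (hl : local_ring S) {x y : S} :
  nn x -> nn y -> nn (x - y).
Proof. by move=> hx hy; apply: hl => //; apply: nnN. Qed.

Lemma nn_sum {S : comUnitRingType} (hl : local_ring S) (I : Type) (r : seq I)
  (P : pred I) (F : I -> S) :
  (forall i, P i -> nn (F i)) -> nn (\sum_(i <- r | P i) F i).
Proof. by move=> h; apply: big_ind; [exact: nn0 | exact: hl | exact: h]. Qed.

Lemma nn_unit {S : comUnitRingType} (hl : local_ring S) (x : S) :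
  nn (x - 1) -> x \is a GRing.unit.
Proof.
move=> h; apply: contraT => hx.
have := hl _ _ hx (nnN h).
by rewrite opprB addrCA subrr addr0 /nn unitr1.
Qed.

Lemma det_cong {S : comUnitRingType} (hl : local_ring S) n (A B : 'M[S]_n) :
  (forall i j, nn (A i j - B i j)) -> nn (\det A - \det B).
Proof.
move=> h; rewrite /determinant -sumrB; apply: nn_sum => // s _.
rewrite -mulrBr; apply: nnM.
apply: (big_ind2 (fun x y => nn (x - y))) => //.
- by rewrite subrr; apply: nn0.
- move=> x1 x2 y1 y2 h1 h2.
  have -> : x1 * y1 - x2 * y2 = (x1 - x2) * y1 + x2 * (y1 - y2).
    by rewrite mulrBl mulrBr addrA subrK.
  by apply: hl; [apply: nnMr | apply: nnM].
Qed.

Lemma det_unit {S : comUnitRingType} (hl : local_ring S) n (E : 'M[S]_n) :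
  (forall i j, nn (E i j)) -> (1%:M - E) \in unitmx.
Proof.
move=> h; rewrite unitmxE; apply: nn_unit => //.
have := @det_cong S hl n (1%:M - E) 1%:M; rewrite det1; apply => i j.
by rewrite !mxE addrAC subrr add0r; apply: nnN.
Qed.

Lemma det_mul_small {S : comUnitRingType} N m (A : 'M[S]_(N, m)) (B : 'M[S]_(m, N)) :
  (m < N)%N -> \det (A *m B) = 0.
Proof.
move=> lt; have [k eN] : exists k, N = (m + k.+1)%N by exists (N - m.+1)%N; lia.
subst N.
have -> : A *m B = row_mx A (0 : 'M_(m + k.+1, k.+1)) *m col_mx B (0 : 'M_(k.+1, m + k.+1)).
  by rewrite mul_row_col mul0mx addr0.
rewrite det_mulmx (expand_det_col _ (rshift m ord0)) big1 ?mul0r // => i _.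
by rewrite row_mxEr mxE mul0r.
Qed.



Lemma cV_expand {S : comUnitRingType} {N} (w : 'cV[S]_N) :
  w = \sum_p w p 0 *: delta_mx p 0.
Proof.
rewrite {1}(matrix_sum_delta w); apply: eq_bigr => p _.
by rewrite big_ord1.
Qed.

Definition coord_hyps {S : comUnitRingType} (V : lmodType S) N
  (coord : V -> 'cV[S]_N) (uncoord : 'cV[S]_N -> V) :=
  [/\ forall x y, coord (x + y) = coord x + coord y,
      forall a x, coord (a *: x) = a *: coord x,
      injective coord & forall w, coord (uncoord w) = w].

Section Gen.
End Gen.

Lemma coord0 {S : comUnitRingType} {V : lmodType S} {N coord uncoord} :
  @coord_hyps S V N coord uncoord -> coord 0 = 0.
Proof. by case=> _ hZ _ _; rewrite -(scale0r (0 : V)) hZ scale0r. Qed.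

Lemma coord_sum {S : comUnitRingType} {V : lmodType S} {N coord uncoord} :
  @coord_hyps S V N coord uncoord ->
  forall (I : Type) (r : seq I) (P : pred I) (F : I -> V),
  coord (\sum_(i <- r | P i) F i) = \sum_(i <- r | P i) coord (F i).
Proof.
move=> h I r P F; have h0 := coord0 h; case: h => hD _ _ _.
exact: (big_morph coord hD h0).
Qed.

Lemma coord_expand {S : comUnitRingType} {V : lmodType S} {N coord uncoord} :
  @coord_hyps S V N coord uncoord ->
  forall y, y = \sum_p coord y p 0 *: uncoord (delta_mx p 0).
Proof.
move=> h y; have hs := coord_sum h; case: h => hD hZ hinj hcu.
apply: hinj; rewrite hs; rewrite {1}(cV_expand (coord y)).
by apply: eq_bigr => p _; rewrite hZ hcu.
Qed.

Lemma gen_upper {S : comUnitRingType} (V : lmodType S) (z : V -> V) N coord uncoord :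
  @coord_hyps S V N coord uncoord ->
  exists v : 'I_N -> V, generates z v.
Proof.
move=> h; exists (fun p => uncoord (delta_mx p 0)) => y.
exists 1%N, (fun p _ => coord y p 0).
rewrite {1}(coord_expand h y); apply: eq_bigr => p _.
by rewrite big_ord1.
Qed.



Lemma gen_lower {S : comUnitRingType} (hl : local_ring S) (V : lmodType S) (z : V -> V) N coord uncoord :
  @coord_hyps S V N coord uncoord ->
  (forall y i, nn (coord (z y) i 0)) ->
  forall m (v : 'I_m -> V), generates z v -> (N <= m)%N.
Proof.
move=> h hz m v hg.
have hs := coord_sum h; case: h => hD hZ hinj hcu.
pose Vm := \matrix_(a < N, l < m) coord (v l) a 0.
have key : forall p : 'I_N, exists r : 'cV[S]_m,
    forall a, nn ((delta_mx p 0 - Vm *m r) a 0).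
  move=> p; have [K [c Ey]] := hg (uncoord (delta_mx p 0)).
  exists (\col_l \sum_(k < K) (if (k : nat) == 0%N then c l k else 0)) => a.
  have hp := hcu (delta_mx p 0); rewrite Ey hs in hp.
  rewrite -hp !mxE summxE.
  have -> : \sum_j Vm a j * (\col_l \sum_(k < K) (if (k : nat) == 0%N then c l k else 0)) j 0
     = \sum_l \sum_(k < K) coord (v l) a 0 * (if (k : nat) == 0%N then c l k else 0).
    by apply: eq_bigr => l _; rewrite !mxE mulr_sumr.
  rewrite -sumrB; apply: nn_sum => // l _.
  rewrite hs summxE -sumrB; apply: nn_sum => // k _.
  rewrite hZ mxE; case: k => [[|k] hk] /=.
    by rewrite mulrC subrr; apply: nn0.
  rewrite mulr0 subr0; apply: nnM; exact: hz.
have [r hr] := fin_all_exists key.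
pose C := \matrix_(l < m, p < N) r p l 0.
pose E := 1%:M - Vm *m C.
have hE : forall a p, nn (E a p).
  move=> a p; have := hr p a.
  rewrite /E !mxE.
  move=> H; suff <- : \sum_j Vm a j * r p j 0 = \sum_j Vm a j * C j p.
    by rewrite andbT in H.
  by apply: eq_bigr => j _; rewrite /C mxE.
have := @det_unit _ hl N E hE; rewrite /E opprB addrC subrK unitmxE.
rewrite leqNgt; apply: contraL => lt.
by rewrite det_mul_small // unitr0.
Qed.



Lemma gen_drop {S : comUnitRingType} (V : lmodType S) (z : V -> V) N coord uncoord :
  @coord_hyps S V N coord uncoord ->
  forall w0 j : 'I_N, j != w0 ->
  coord (z (uncoord (delta_mx j 0))) w0 0 \is a GRing.unit ->
  exists v : 'I_N.-1 -> V, generates z v.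
Proof.
move=> h w0 j hjw hu.
have hs := coord_sum h; have hex := coord_expand h; case: h => hD hZ hinj hcu.
have hwj : w0 != j by rewrite eq_sym.
have [q0 ej _] := unlift_some hwj.
set bj := uncoord (delta_mx j 0).
set u := coord (z bj) w0 0.
have hB : forall x y, coord (x - y) = coord x - coord y.
  by move=> x y; rewrite hD -scaleN1r hZ scaleN1r.
have hw0 : uncoord (delta_mx w0 0) = u^-1 *: (z bj -
    \sum_q coord (z bj) (lift w0 q) 0 *: uncoord (delta_mx (lift w0 q) 0)).
  apply: hinj; rewrite hZ hB hs hcu.
  have -> : \sum_q coord (coord (z bj) (lift w0 q) 0 *: uncoord (delta_mx (lift w0 q) 0))
     = \sum_q coord (z bj) (lift w0 q) 0 *: delta_mx (lift w0 q) 0.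
    by apply: eq_bigr => q _; rewrite hZ hcu.
  have tE := cV_expand (coord (z bj)); rewrite (bigD1_ord w0) //= in tE.
  by rewrite {1}tE addrK scalerA mulVr // scale1r.
exists (fun q => uncoord (delta_mx (lift w0 q) 0)) => y.
exists 2%N, (fun q k => if (k : nat) == 0%N then
   coord y (lift w0 q) 0 - coord y w0 0 * u^-1 * coord (z bj) (lift w0 q) 0
   else (if q == q0 then coord y w0 0 * u^-1 else 0)).
rewrite {1}(hex y) (bigD1_ord w0) //= hw0.
under [RHS]eq_bigr => q _ do rewrite big_ord_recl big_ord1 /=.
rewrite big_split /= [X in _ = _ + X](bigD1 q0) //= eqxx.
rewrite [X in _ = _ + (_ + X)]big1 => [|q hq]; last by rewrite (negbTE hq) scale0r.
rewrite addr0 -ej -/bj.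
under [in RHS]eq_bigr => q _ do rewrite scalerBl.
rewrite sumrB scalerA scalerBr scaler_sumr.
under [X in _ - X + _]eq_bigr => q _ do rewrite scalerA.
by rewrite [LHS]addrC [LHS]addrCA [LHS]addrC.
Qed.



Lemma diag_pow {S : comUnitRingType} (hl : local_ring S) n (phi : 'M[S]_n) :
  (forall r s, s != r -> nn (phi r s)) ->
  forall k r, (forall s, s != r -> nn ((phi ^+ k) r s)) /\
              nn ((phi ^+ k) r r - phi r r ^+ k).
Proof.
move=> ho; elim => [|k IH] r.
  rewrite expr0; split => [s hs|]; rewrite !mxE.
    by rewrite eq_sym (negbTE hs) mulr0n; apply: nn0.
  by rewrite eqxx mulr1n subrr; apply: nn0.
rewrite exprSr -mulmxE; split => [s hs|]; rewrite mxE (bigD1 r) //=.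
  apply: (hl _ _); first by apply: nnM; apply: ho.
  by apply: (nn_sum hl) => t ht; apply: nnMr; apply: (IH r).1.
rewrite exprSr addrAC -mulrBl; apply: (hl _ _); first by apply: nnMr; apply: (IH r).2.
by apply: (nn_sum hl) => t ht; apply: nnMr; apply: (IH r).1.
Qed.

Lemma part1 {S : comUnitRingType} (hl : local_ring S) (d : nat) (f mu : S)
  (hd : (2 <= d)%N) (hf : nn f) (hmu : mu \is a GRing.unit) n (phi : 'M[S]_n)
  (hphi : phi ^+ d = - f%:M) :
  mu_is (fun x : 'cV[S]_n => phi *m x) n <-> reduced (@flat S d n mu phi).
Proof.
have hc : coord_hyps ('cV[S]_n) n id id by split.
have redE : reduced (@flat S d n mu phi) <->
    [forall i, forall j, phi i j \notin GRing.unit].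
  split.
    move=> hr; apply/forallP => i; apply/forallP => j.
    have d0 : (0 < d)%N by lia.
    have := hr (Ordinal d0) (delta_mx j 0) i.
    by rewrite /flat -colE !mxE /nn unitrM hmu.
  move=> /forallP hb k x i; rewrite /flat mxE; apply: (nn_sum hl) => j _.
  rewrite mxE -mulrA; apply: nnM; apply: nnMr.
  exact: (forallP (hb i) j).
rewrite redE; split.
  move=> [_ hmin].
  case hb: [forall i, forall j, phi i j \notin GRing.unit] => //; exfalso.
  move/negbT/forallPn: hb => [i /forallPn [j /negPn hu]].
  case ho: [exists i', exists j', (j' != i') && (phi i' j' \is a GRing.unit)].
    move/existsP: ho => [i' /existsP [j' /andP [hne hu']]].
    have hu2 : (phi *m (delta_mx j' 0 : 'cV[S]_n)) i' 0 \is a GRing.unit by rewrite -colE mxE.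
    have [v hv] := @gen_drop S _ (fun x : 'cV[S]_n => phi *m x) n id id hc i' j' hne hu2.
    have := hmin _ v hv.
    have : (0 < n)%N by apply: leq_ltn_trans (ltn_ord i).
    lia.
  have ho' : forall r s, s != r -> nn (phi r s).
    move=> r s hsr; apply/negP => hu'.
    move: ho => /negbT /negP; apply; apply/existsP; exists r; apply/existsP; exists s.
    by rewrite hsr hu'.
  have [hji|hji] := eqVneq j i; last first.
    by move: (ho' _ _ hji); rewrite /nn hu.
  subst j.
  have [_ h2] := @diag_pow S hl n phi ho' d i.
  rewrite hphi !mxE eqxx mulr1n in h2.
  have : nn (phi i i ^+ d).
    have -> : phi i i ^+ d = (- f) - ((- f) - phi i i ^+ d).
      by rewrite opprB addrC subrK.
    by apply: nnB => //; apply: nnN.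
  by rewrite /nn unitrX.
move=> hb; split; first exact: (@gen_upper S _ _ n id id hc).
apply: (@gen_lower S hl _ (fun x : 'cV[S]_n => phi *m x) n id id hc) => y i /=.
rewrite mxE; apply: (nn_sum hl) => j _; apply: nnMr.
exact: (forallP (forallP hb i) j).
Qed.



Definition fcoord {S : comUnitRingType} d n (x : {ffun 'I_d -> 'cV[S]_n}) : 'cV[S]_(d * n) :=
  (mxvec (\matrix_(k, l) x k l 0))^T.
Definition funcoord {S : comUnitRingType} d n (w : 'cV[S]_(d * n)) : {ffun 'I_d -> 'cV[S]_n} :=
  [ffun k => \col_l w (mxvec_index k l) 0].

Arguments fcoord {S d n}.
Arguments funcoord {S d n}.

Lemma fcoordE {S : comUnitRingType} d n (x : {ffun 'I_d -> 'cV[S]_n}) k l :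
  fcoord x (mxvec_index k l) 0 = x k l 0.
Proof. by rewrite mxE mxvecE mxE. Qed.

Lemma mxvec_index_inj m n (a a' : 'I_m) (b b' : 'I_n) :
  mxvec_index a b = mxvec_index a' b' -> a = a' /\ b = b'.
Proof. by rewrite /mxvec_index => /cast_ord_inj /enum_rank_inj [-> ->]. Qed.

Lemma fcoord_hyps {S : comUnitRingType} d n :
  coord_hyps {ffun 'I_d -> 'cV[S]_n} (d * n) (@fcoord S d n) (@funcoord S d n).
Proof.
split.
- move=> x y; apply/matrixP => p i; rewrite (ord1 i); case: (mxvec_indexP p) => k l.
  by rewrite [RHS]mxE !fcoordE !ffunE mxE.
- move=> a x; apply/matrixP => p i; rewrite (ord1 i); case: (mxvec_indexP p) => k l.
  by rewrite [RHS]mxE !fcoordE !ffunE mxE.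
- move=> x y h; apply/ffunP => k; apply/matrixP => l i; rewrite (ord1 i) -!fcoordE h.
  by [].
- move=> w; apply/matrixP => p i; rewrite (ord1 i); case: (mxvec_indexP p) => k l.
  by rewrite fcoordE ffunE mxE.
Qed.



Lemma ordS_neq d (k : 'I_d) : (2 <= d)%N -> ordS k != k.
Proof.
move=> hd; apply/eqP => /(congr1 val) /=.
have hk := ltn_ord k.
case: (ltnP k.+1 d) => h.
  rewrite modn_small //; lia.
have -> : k.+1 = d by lia.
rewrite modnn; lia.
Qed.

Lemma part2 {S : comUnitRingType} (hl : local_ring S) (d : nat) (mu : S)
  (hd : (2 <= d)%N) (hmu : mu \is a GRing.unit) n (X : 'I_d -> 'M[S]_n) :
  mu_is (sharp_z mu X) (d * n) <-> reduced X.
Proof.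
have hc := @fcoord_hyps S d n.
have redE : reduced X <->
    [forall k, forall i, forall j, X k i j \notin GRing.unit].
  split.
    move=> hr; apply/forallP => k; apply/forallP => i; apply/forallP => j.
    by have := hr k (delta_mx j 0) i; rewrite -colE mxE.
  move=> /forallP hb k x i; rewrite mxE; apply: (nn_sum hl) => j _.
  apply: nnMr; exact: (forallP (forallP (hb k) i) j).
rewrite redE; split.
  move=> [_ hmin].
  case hb: [forall k, forall i, forall j, X k i j \notin GRing.unit] => //; exfalso.
  move/negbT/forallPn: hb => [k /forallPn [i /forallPn [j /negPn hu]]].
  have hne : mxvec_index (ordS k) j != mxvec_index k i.
    apply/eqP => /mxvec_index_inj [hk _]; move: (@ordS_neq d k hd).
    by rewrite hk eqxx.
  have e : funcoord (delta_mx (mxvec_index (ordS k) j) 0 : 'cV[S]_(d * n)) (ordS k)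
       = delta_mx j 0.
    apply/matrixP => l i0; rewrite ffunE !mxE (ord1 i0) /=.
    have -> : (mxvec_index (ordS k) l == mxvec_index (ordS k) j) = (l == j).
      by apply/eqP/eqP => [/mxvec_index_inj [_ ->]|->].
    by [].
  have hu2 : fcoord (sharp_z mu X (funcoord (delta_mx (mxvec_index (ordS k) j) 0)))
      (mxvec_index k i) 0 \is a GRing.unit.
    by rewrite fcoordE /sharp_z ffunE e mxE -colE mxE unitrM unitrV hmu.
  have [v hv] := @gen_drop S _ (sharp_z mu X) (d * n) fcoord funcoord hc _ _ hne hu2.
  have := hmin _ v hv.
  have : (0 < d * n)%N.
    rewrite muln_gt0; apply/andP; split; [lia | exact: leq_ltn_trans (ltn_ord i)].
  lia.
move=> hb; split; first exact: (@gen_upper S _ _ (d * n) fcoord funcoord hc).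
apply: (@gen_lower S hl _ (sharp_z mu X) (d * n) fcoord funcoord hc) => y p.
case: (mxvec_indexP p) => k l.
rewrite fcoordE /sharp_z ffunE mxE; apply: nnM.
rewrite mxE; apply: (nn_sum hl) => j _; apply: nnMr.
exact: (forallP (forallP (forallP hb k) l) j).
Qed.


Theorem lemma5p7 (S : comUnitRingType) (d : nat) (f mu : S) :
  (2 <= d)%N ->
  regular_local S -> complete S -> residue_alg_closed S ->
  (d%:R : S) \is a GRing.unit ->
  f != 0 -> mpow 2 f ->
  ps_irreducible (f_plus_zd f d) ->
  mu ^+ d = -1 ->
  (forall (n : nat) (phi : 'M[S]_n), phi ^+ d = - f%:M ->
     (mu_is (fun x : 'cV[S]_n => phi *m x) n <-> reduced (@flat S d n mu phi)))
  /\
  (forall (n : nat) (X : 'I_d -> 'M[S]_n), is_MF f X ->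
     (mu_is (sharp_z mu X) (d * n) <-> reduced X)).
Proof.
move=> hd [_ hl _] _ _ _ _ hf2 _ hmud.
have hf : nn f.
  case: hf2 => m [a [b [hab ->]]].
  apply: (nn_sum hl) => i _; apply: nnMr; exact: (hab i).1.
have hmu : mu \is a GRing.unit.
  rewrite -(@unitrX_pos _ mu d); last by lia.
  by rewrite hmud unitrN unitr1.
split.
  move=> n phi hphi; exact: (@part1 S hl d f mu hd hf hmu n phi hphi).
move=> n X _; exact: (@part2 S hl d mu hd hmu n X).
Qed.
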